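(* Let $r \geq 3$ be a fixed integer and $F$ a graph with chromatic number $\chi(F) \leq r$. Then there is a positive constant $C$, depending on $r$ and $F$, such that \[ \mathrm{ex}_r ( n , F^+) \leq C n^{ r- 1 /x^{r - 1} }, \quad\text{where } x = \binom{r}{2} |V(F)|^2 + |V(F)|. \]
   Context: The $r$-uniform expansion $F^+$ of a graph $F$ is obtained by replacing each edge $e$ of $F$ by $e\cup S_e$, where the $S_e$ are sets of $r-2$ new vertices not in $V(F)$, pairwise disjoint for distinct edges. $\mathrm{ex}_r(n,F^+)$ is the maximum number of edges in an $n$-vertex $r$-uniform hypergraph with no subhypergraph isomorphic to $F^+$. *)

(* Defs.v *)
From HB Require Import structures.
From mathcomp Require Import all_boot all_order all_algebra.
From mathcomp Require Import reals exp.
Set Implicit Arguments. Unset Strict Implicit. Unset Printing Implicit Defensive.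

Definition simple_graph (T : finType) (adj : rel T) : Prop :=
  symmetric adj /\ irreflexive adj.

Definition gedges (T : finType) (adj : rel T) : {set {set T}} :=
  [set [set x; y] | x in T, y in T & adj x y].

Definition colorable (T : finType) (adj : rel T) (k : nat) : Prop :=
  exists c : T -> 'I_k, forall x y, adj x y -> c x != c y.

Definition uniform (V : finType) (r : nat) (H : {set {set V}}) : bool :=
  [forall e in H, #|e| == r].

Definition contains_copy (V1 V2 : finType) (H1 : {set {set V1}})
    (H2 : {set {set V2}}) : bool :=
  [exists f : {ffun V1 -> V2}, injectiveb f && [forall e in H1, (f @: e) \in H2]].

(* The r-uniform expansion F^+ : vertices of F plus, for every edge e of F,
   r-2 new vertices (e,0),...,(e,r-3); the edge e is replaced by
   e together with its r-2 new vertices. *)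
Definition exp_vertex (T : finType) (adj : rel T) (r : nat) : finType :=
  (T + ({e : {set T} | e \in gedges adj} * 'I_(r - 2)))%type.

Definition expansion (T : finType) (adj : rel T) (r : nat)
    : {set {set exp_vertex adj r}} :=
  [set ((@inl T _) @: val e) :|:
       [set (@inr T _ (e, i)) | i : 'I_(r - 2)]
  | e : {e : {set T} | e \in gedges adj}].

Definition ex_exp (T : finType) (adj : rel T) (r n : nat) : nat :=
  \max_(H : {set {set 'I_n}} | uniform r H && ~~ contains_copy (expansion adj r) H)
     #|H|.

(* Main.v *)
Require Import Defs.
From HB Require Import structures.
From mathcomp Require Import all_boot all_order all_algebra.
From mathcomp Require Import reals exp.
From mathcomp Require Import zify ring.
Set Implicit Arguments. Unset Strict Implicit. Unset Printing Implicit Defensive.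

Lemma bin_lb t d : t <= d -> d ^ t <= t ^ t * 'C(d, t).
Proof.
elim: t d => [|t IH] d htd; first by rewrite bin0.
case: d htd => [//|d] htd; rewrite ltnS in htd.
have h1 := mul_bin_diag d.+1 t; rewrite /= in h1.
have hpos : 0 < t ^ t by rewrite expn_gt0; case: t {IH htd h1}.
have IH' := IH _ htd.
have h2 : (d.+1 * t) ^ t <= (t.+1 * d) ^ t.
  by case: t {IH IH' h1 hpos} htd => [//|t] htd; rewrite leq_exp2r //; nia.
rewrite !expnMn in h2.
rewrite -(leq_pmul2r hpos).
rewrite !expnS.
have -> : t.+1 * t.+1 ^ t * 'C(d.+1, t.+1) * t ^ t = d.+1 * (t.+1 ^ t * (t ^ t * 'C(d, t))).
  transitivity (t.+1 * 'C(d.+1, t.+1) * (t.+1 ^ t * t ^ t)); first ring.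
  rewrite -h1; ring.
rewrite -mulnA leq_mul2l /=.
apply: (leq_trans h2); by rewrite leq_mul2l IH' orbT.
Qed.

Lemma leq_expr m n k : m <= n -> m ^ k <= n ^ k.
Proof. by case: k => [//|k] h; rewrite leq_exp2r. Qed.

Lemma cheb_pt x y k : x ^ k * y + y ^ k * x <= x ^ k.+1 + y ^ k.+1.
Proof.
wlog hxy : x y / x <= y.
  move=> W; case: (leqP x y) => h; first exact: W.
  by rewrite addnC [X in _ <= X]addnC; apply: W; apply: ltnW.
have hk := leq_expr k hxy.
rewrite !expnS; move: (x ^ k) (y ^ k) hk => X Y hk; nia.
Qed.

Lemma cheb (I : finType) (A : pred I) (a : I -> nat) k :
  (\sum_(i in A) a i ^ k) * (\sum_(i in A) a i) <= #|A| * \sum_(i in A) a i ^ k.+1.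
Proof.
rewrite -(leq_pmul2l (isT : 0 < 2)).
have -> : (\sum_(i in A) a i ^ k) * (\sum_(i in A) a i) =
   \sum_(i in A) \sum_(j in A) a i ^ k * a j.
  by rewrite big_distrl /=; apply: eq_bigr => i _; rewrite big_distrr.
have -> : #|A| * \sum_(i in A) a i ^ k.+1 =
   \sum_(i in A) \sum_(j in A) a j ^ k.+1.
  by rewrite -sum_nat_const.
rewrite !mul2n -!addnn.
rewrite [X in X + _ <= _]exchange_big /= [X in _ <= _ + X]exchange_big /=.
rewrite -!big_split /=; apply: leq_sum => i _; rewrite -!big_split /=.
apply: leq_sum => j _.
exact: cheb_pt.
Qed.

Lemma powmean (I : finType) (A : pred I) (a : I -> nat) k :
  (\sum_(i in A) a i) ^ k.+1 <= #|A| ^ k * \sum_(i in A) a i ^ k.+1.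
Proof.
elim: k => [|k IH]; first by rewrite expn0 mul1n; apply: leq_sum => i _; rewrite expn1.
rewrite expnSr.
apply: (leq_trans (leq_mul IH (leqnn _))).
rewrite -mulnA expnSr -mulnA leq_mul2l; apply/orP; right; exact: cheb.
Qed.

Section Hyp.
Variable V : finType.

Definition hasK (H : {set {set V}}) r t :=
  exists f : 'I_r * 'I_t -> V, injective f /\
    forall g : 'I_r -> 'I_t, [set f (j, g j) | j : 'I_r] \in H.

Definition link (H : {set {set V}}) r (T : {set V}) : {set {set V}} :=
  [set S : {set V} | [&& #|S| == r, [disjoint S & T] & [forall v in T, (v |: S) \in H]]].

Lemma imset_lift0 r (F : 'I_r.+1 -> V) :
  [set F j | j : 'I_r.+1] = F ord0 |: [set F (lift ord0 j) | j : 'I_r].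
Proof.
apply/setP => x; rewrite in_setU1; apply/imsetP/idP.
  case=> j _ ->; case: (unliftP ord0 j) => [j'|] ->; last by rewrite eqxx.
  by apply/orP; right; apply: imset_f.
case/orP => [/eqP ->|/imsetP [j _ ->]]; first by exists ord0.
by exists (lift ord0 j).
Qed.

Lemma link_free (H : {set {set V}}) r t (T : {set V}) :
  #|T| = t -> hasK (link H r T) r t -> hasK H r.+1 t.
Proof.
move=> hT [f' [finj fH]].
pose eT (i : 'I_t) : V := enum_val (A := T) (cast_ord (esym hT) i).
have eTin i : eT i \in T by apply: enum_valP.
have eTinj : injective eT.
  by move=> i1 i2 /enum_val_inj /cast_ord_inj.
have notin j' i : f' (j', i) \notin T.
  have := fH (fun _ => i); rewrite inE => /and3P [_ hd _].
  by rewrite (disjointFr hd) // imset_f.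
pose f (p : 'I_r.+1 * 'I_t) : V :=
  if unlift ord0 p.1 is Some j' then f' (j', p.2) else eT p.2.
exists f; split.
  move=> [j1 i1] [j2 i2]; rewrite /f /=.
  case: (unliftP ord0 j1) => [j1'|] -> ; case: (unliftP ord0 j2) => [j2'|] -> //.
  - by move/finj => [-> ->].
  - by move=> e; move: (notin j1' i1); rewrite e eTin.
  - by move=> e; move: (notin j2' i2); rewrite -e eTin.
  - by move/eTinj ->.
move=> g.
rewrite (imset_lift0 (fun j => f (j, g j))) /f /= unlift_none.
have := fH (fun j => g (lift ord0 j)); rewrite inE => /and3P [_ _ /forall_inP hv].
have -> : [set (if unlift ord0 (lift ord0 j) is Some j' then f' (j', g (lift ord0 j)) else eT (g (lift ord0 j))) | j : 'I_r] = [set f' (j, g (lift ord0 j)) | j : 'I_r].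
  by apply: eq_imset => j; rewrite liftK.
exact: hv.
Qed.
End Hyp.

Lemma sum_ind (I : finType) (P Q : pred I) :
  \sum_(i | P i) (Q i : nat) = #|[set i | P i && Q i]|.
Proof.
rewrite -sum1dep_card big_mkcondr /=; apply: eq_bigr => i _; by case: (Q i).
Qed.

Lemma disjP (T : finType) (A B : {set T}) :
  reflect (forall x, x \in A -> x \in B -> False) [disjoint A & B].
Proof.
rewrite disjoint_subset; apply: (iffP subsetP) => h x xA.
  by move: (h x xA); rewrite inE => /negP.
by rewrite inE; apply/negP; exact: h.
Qed.

Section DC.
Variables (V : finType) (H : {set {set V}}) (r : nat).
Hypothesis unif : forall e, e \in H -> #|e| = r.+1.

Definition NS (S : {set V}) := [set v | (v \notin S) && (v |: S \in H)].

Lemma dc_link t :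
  \sum_(T : {set V} | #|T| == t) #|link H r T| =
  \sum_(S : {set V} | #|S| == r) 'C(#|NS S|, t).
Proof.
have cardL T : #|link H r T| = \sum_(S : {set V} | #|S| == r) (S \in link H r T : nat).
  rewrite sum_ind; apply: eq_card => S; rewrite [in RHS]inE.
  case hS: (S \in link H r T); rewrite ?andbF ?andbT //.
  by move: hS; rewrite inE => /and3P [] ->.
rewrite (eq_bigr _ (fun T _ => cardL T)) exchange_big /=.
apply: eq_bigr => S /eqP hS.
have key T : (S \in link H r T) = (T \subset NS S).
  rewrite inE hS eqxx /=; apply/andP/subsetP.
  - case=> /disjP hd /forall_inP hv v vT; rewrite inE hv // andbT.
    by apply/negP => vS; exact: hd v vS vT.
  - move=> hsub; split.
      apply/disjP => v vS vT; move: (hsub v vT); by rewrite inE vS.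
    by apply/forall_inP => v vT; move: (hsub v vT); rewrite inE => /andP [].
under eq_bigr => T _ do rewrite key.
rewrite sum_ind -cards_draws; apply: eq_card => T; by rewrite !inE andbC.
Qed.

Lemma dc_deg :
  #|H| <= \sum_(S : {set V} | #|S| == r) #|NS S|.
Proof.
have h1 (S : {set V}) : #|S| = r -> #|[set e in H | S \subset e]| <= #|NS S|.
  move=> hS; apply: (leq_trans _ (leq_imset_card (fun v => v |: S) _)).
  apply: subset_leq_card; apply/subsetP => e; rewrite inE => /andP [eH Se].
  have : ~~ (e \subset S).
    apply/negP => /subset_leq_card; by rewrite unif // hS ltnn.
  case/subsetPn => v ve vS.
  have ee : v |: S = e.
    apply/eqP; rewrite eqEcard subUset sub1set ve Se /= cardsU1 vS hS unif //.
  by apply/imsetP; exists v => //; rewrite inE vS ee eH.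
apply: (@leq_trans (\sum_(S : {set V} | #|S| == r) #|[set e in H | S \subset e]|)); last first.
  by apply: leq_sum => S /eqP; apply: h1.
have hh (S : {set V}) : #|[set e in H | S \subset e]| = \sum_(e | e \in H) (S \subset e : nat).
  by rewrite sum_ind; apply: eq_card => e; rewrite !inE.
under eq_bigr => S _ do rewrite hh.
rewrite exchange_big /=.
have hh2 e : e \in H -> \sum_(S : {set V} | #|S| == r) (S \subset e : nat) = r.+1.
  move=> eH; rewrite sum_ind.
  have -> : #|[set S : {set V} | (#|S| == r) && (S \subset e)]| = 'C(#|e|, r).
    by rewrite -cards_draws; apply: eq_card => S; rewrite !inE andbC.
  by rewrite unif // binSn.
under eq_bigr => e eH do rewrite (hh2 e eH).
by rewrite sum_nat_const -[X in X <= _]muln1 leq_mul2l ltn0Sn orbT.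
Qed.
End DC.

Lemma ffact_le_exp n k : n ^_ k <= n ^ k.
Proof.
elim: k n => [|k IH] n //; rewrite ffactnS expnS leq_mul2l.
apply/orP; right; apply: (leq_trans (IH _)); apply: leq_expr; exact: leq_pred.
Qed.

Lemma bin_le_exp n k : 'C(n, k) <= n ^ k.
Proof.
apply: (leq_trans _ (ffact_le_exp n k)); rewrite -bin_ffact.
by rewrite -[X in X <= _]muln1 leq_mul2l fact_gt0 orbT.
Qed.

Lemma sum2_exp a b k : (a + b) ^ k <= 2 ^ k * (a ^ k + b ^ k).
Proof.
wlog hab : a b / a <= b.
  move=> W; case: (leqP a b) => h; first exact: W.
  by rewrite addnC [_ ^ k + _]addnC; apply: W; apply: ltnW.
apply: (leq_trans (leq_expr k (_ : a + b <= 2 * b))); first by lia.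
by rewrite expnMn leq_mul2l leq_addl orbT.
Qed.

Lemma bin_lb1 s d : d ^ s <= s ^ s * ('C(d, s) + 1).
Proof.
case: (leqP s d) => h.
  by apply: (leq_trans (bin_lb h)); rewrite leq_mul2l leq_addr orbT.
apply: (leq_trans (leq_expr s (ltnW h))).
by rewrite -[X in X <= _]muln1 leq_mul2l addn1 ltn0Sn orbT.
Qed.

Lemma step_count (V : finType) (H : {set {set V}}) r s :
  (forall e, e \in H -> #|e| = r.+1) -> 0 < s ->
  #|H| ^ s <= #|V| ^ (r * s.-1) * s ^ s *
     (\sum_(T : {set V} | #|T| == s) #|link H r T| + #|V| ^ r).
Proof.
move=> unif s0.
set N := #|[set S : {set V} | #|S| == r]|.
have hN : N <= #|V| ^ r.
  by rewrite /N card_draws bin_le_exp.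
have e1 := leq_expr s (dc_deg unif).
have e2 := powmean (fun S : {set V} => #|S| == r) (fun S => #|NS H S|) s.-1.
rewrite prednK // in e2.
have e3 : \sum_(S : {set V} | #|S| == r) #|NS H S| ^ s <=
    s ^ s * (\sum_(T : {set V} | #|T| == s) #|link H r T| + N).
  apply: leq_trans; first by apply: leq_sum => S _; exact: bin_lb1.
  by rewrite -big_distrr /= big_split /= -(dc_link H r s) sum1dep_card.
have hc : #|(fun S : {set V} => #|S| == r)| = N by rewrite /N cardsE.
rewrite hc in e2.
apply: (leq_trans e1); apply: (leq_trans e2).
rewrite -mulnA; apply: leq_mul.
  by rewrite expnM; apply: leq_expr.
apply: (leq_trans e3); rewrite leq_mul2l leq_add2l hN orbT //.
Qed.

Lemma hasK0 (V : finType) (H : {set {set V}}) s : set0 \in H -> hasK H 0 s.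
Proof.
move=> h0.
have f : 'I_0 * 'I_s -> V by case => [[]].
exists f; split; first by case => [[]].
move=> g; suff -> : [set f (j, g j) | j : 'I_0] = set0 by [].
by apply/setP => x; rewrite inE; apply/imsetP => [[[]]].
Qed.

Lemma arith_e r a k : 0 < a -> 0 < k ->
  r.+1 * a.-1 * k + (a * k + (r.+1 * k - 1)) = r.+2 * (a * k) - 1.
Proof. case: a => [//|a]; case: k => [//|k] _ _ /=; nia. Qed.

Lemma erdos r s : 0 < s -> exists C, forall (V : finType) (H : {set {set V}}),
  (forall e, e \in H -> #|e| = r.+1) -> ~ hasK H r.+1 s ->
  #|H| ^ (s ^ r) <= C * #|V| ^ (r.+1 * s ^ r - 1).
Proof.
move=> s0; elim: r => [|r [C' IH]].
  exists s => V H unif nK.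
  rewrite expn0 mul1n subnn expn0 muln1 expn1.
  have hl (T : {set V}) : #|T| == s -> link H 0 T = set0.
    move=> /eqP hT; apply/setP => S; rewrite in_set0; apply/negP => hS.
    have : S = set0 by apply/cards0_eq; move: hS; rewrite inE => /and3P [/eqP].
    move=> e; subst S; apply: nK; apply: (link_free hT); exact: hasK0.
  have := step_count unif s0.
  rewrite big1; last by move=> T /hl ->; rewrite cards0.
  rewrite !expn0 mul1n add0n muln1 leq_exp2r //.
set K := s ^ r.
have K0 : 0 < K by rewrite expn_gt0 s0.
exists (s ^ (s * K) * 2 ^ K * C'.+1) => V H unif nK.
set n := #|V|.
have hX (T : {set V}) : #|T| == s -> #|link H r.+1 T| ^ K <= C' * n ^ (r.+1 * K - 1).
  move=> /eqP hT; apply: IH.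
    by move=> S; rewrite inE => /and3P [/eqP].
  by move=> hk; apply: nK; exact: (link_free hT hk).
set X := \sum_(T : {set V} | #|T| == s) #|link H r.+1 T|.
have hXK : X ^ K <= n ^ (s * K) * (C' * n ^ (r.+1 * K - 1)).
  have := powmean (fun T : {set V} => #|T| == s) (fun T => #|link H r.+1 T|) K.-1.
  rewrite prednK // => pm; apply: (leq_trans pm).
  have hc : #|(fun T : {set V} => #|T| == s)| <= n ^ s.
    by rewrite -cardsE card_draws bin_le_exp.
  apply: (@leq_trans (#|(fun T : {set V} => #|T| == s)| ^ K.-1 *
                       (#|(fun T : {set V} => #|T| == s)| * (C' * n ^ (r.+1 * K - 1))))).
    rewrite leq_mul2l; apply/orP; right.
    rewrite -sum_nat_const; apply: leq_sum => T hT; exact: hX.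
  rewrite mulnA -expnSr prednK // mulnC [X in _ <= X]mulnC leq_mul2l; apply/orP; right.
  by rewrite expnM; apply: leq_expr.
set e' := r.+1 * K - 1.
have sK0 : 0 < s * K by rewrite muln_gt0 s0 K0.
have hN : n ^ (r.+1 * K) <= n ^ (s * K + e').
  case: (posnP n) => [->|np].
    by rewrite exp0n // muln_gt0 K0.
  apply: leq_pexp2l => //; rewrite /e'.
  move: sK0; move: (r.+1 * K) (s * K) => a b hb; lia.
have hsum : (X + n ^ r.+1) ^ K <= 2 ^ K * (C'.+1 * n ^ (s * K + e')).
  apply: (leq_trans (sum2_exp _ _ _)); rewrite leq_mul2l; apply/orP; right.
  rewrite -expnM; apply: (leq_trans (leq_add hXK hN)); rewrite expnD; apply: eq_leq; ring.
have sc := @step_count V H r.+1 s unif s0.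
rewrite expnS -/K expnM.
apply: (leq_trans (leq_expr K sc)); rewrite !expnMn -!expnM.
apply: (@leq_trans (n ^ (r.+1 * s.-1 * K) * s ^ (s * K) * (2 ^ K * (C'.+1 * n ^ (s * K + e'))))).
  by rewrite leq_mul2l hsum orbT.
have hE : r.+1 * s.-1 * K + (s * K + e') = r.+2 * (s * K) - 1.
  by rewrite /e' arith_e.
rewrite -hE !expnD; apply: eq_leq; ring.
Qed.

Section Embed.
Variables (T : finType) (adj : rel T) (r' : nat) (c : T -> 'I_r'.+3).
Hypothesis hc : forall x y, adj x y -> c x != c y.
Local Notation r := r'.+3.
Local Notation EV := (exp_vertex adj r).

Lemma gedgesP e : e \in gedges adj -> exists x y, adj x y /\ e = [set x; y].
Proof.
case/imset2P => x y _; rewrite inE => /andP [_ hxy] ->; by exists x, y.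
Qed.

Definition Dc (e : {set T}) : {set 'I_r} := ~: (c @: e).

Lemma card_Dc e : e \in gedges adj -> #|Dc e| = r'.+1.
Proof.
case/gedgesP => x [y [hxy ->]].
have h2 : #|c @: [set x; y]| = 2 by rewrite imsetU1 imset_set1 cards2 hc.
have := cardsC (c @: [set x; y]); rewrite h2 card_ord /Dc => h.
by apply: (@addnI 2); rewrite h.
Qed.

Definition col (v : EV) : 'I_r :=
  match v with inl x => c x | inr p => nth ord0 (enum (Dc (val p.1))) p.2 end.

Definition Ep (e : {e : {set T} | e \in gedges adj}) : {set EV} :=
  ((@inl T _) @: val e) :|: [set (@inr T _ (e, i)) | i : 'I_(r - 2)].

Lemma size_Dc (e : {e : {set T} | e \in gedges adj}) : size (enum (Dc (val e))) = r'.+1.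
Proof. by rewrite -cardE card_Dc // (valP e). Qed.

Lemma col_inj e : {in Ep e &, injective col}.
Proof.
have [a [b [hab he]]] := gedgesP (valP e).
have cab : c a != c b by apply: hc.
have nthD (i : 'I_(r - 2)) : nth ord0 (enum (Dc (val e))) i \in Dc (val e).
  by rewrite -mem_enum mem_nth // size_Dc.
have notD x : x \in val e -> nth ord0 (enum (Dc (val e))) = nth ord0 (enum (Dc (val e))) -> forall i : 'I_(r - 2), c x != nth ord0 (enum (Dc (val e))) i.
  move=> xe _ i; apply/eqP => h; move: (nthD i); rewrite -h /Dc inE.
  by rewrite imset_f.
move=> v w; rewrite !inE => /orP [/imsetP [x xe ->]|/imsetP [i _ ->]] /orP [/imsetP [y ye ->]|/imsetP [j _ ->]] /=.
- move: xe ye; rewrite he !inE => /orP [] /eqP -> /orP [] /eqP -> //= h.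
    by move: cab; rewrite h eqxx.
  by move: cab; rewrite h eqxx.
- by move=> h; move: (notD x xe erefl j); rewrite h eqxx.
- by move=> h; move: (notD y ye erefl i); rewrite h eqxx.
- move/eqP; rewrite nth_uniq ?size_Dc ?enum_uniq // => /eqP h.
  by congr (inr (_, _)); apply: val_inj.
Qed.

Lemma col_surj e (j : 'I_r) : exists2 v, v \in Ep e & col v = j.
Proof.
case: (boolP (j \in c @: val e)) => [/imsetP [x xe ->]|hj].
  by exists (inl x) => //; rewrite !inE imset_f.
have jD : j \in enum (Dc (val e)) by rewrite mem_enum /Dc inE.
have hi : index j (enum (Dc (val e))) < r'.+1.
  by rewrite -[X in _ < X](size_Dc e) index_mem.
exists (inr (e, (Ordinal hi : 'I_(r - 2)))); first by rewrite !inE; apply/orP; right; apply: imset_f.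
by rewrite /= nth_index.
Qed.

Lemma embed (W : finType) (H : {set {set W}}) t :
  #|EV| <= t -> hasK H r t -> contains_copy (expansion adj r) H.
Proof.
move=> ht [f [finj fH]].
pose idx (v : EV) : 'I_t := widen_ord ht (enum_rank v).
have idx_inj : injective idx.
  by move=> v w /(congr1 val) /= /val_inj /enum_rank_inj.
pose phi := [ffun v => f (col v, idx v)].
apply/existsP; exists phi; apply/andP; split.
  apply/injectiveP => v w; rewrite !ffunE => /finj h.
  by apply: idx_inj; exact: (congr1 snd h).
apply/forall_inP => E /imsetP [e _ ->].
change (phi @: Ep e \in H).
pose g (j : 'I_r) : 'I_t :=
  if [pick v in Ep e | col v == j] is Some v then idx v else idx (inr (e, ord0)).
suff -> : phi @: Ep e = [set f (j, g j) | j : 'I_r] by apply: fH.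
apply/setP => y; apply/imsetP/imsetP.
- case=> v vE ->; exists (col v) => //; rewrite ffunE /g.
  case: pickP => [w /andP [wE /eqP hw]|]; last by move/(_ v); rewrite vE eqxx.
  by rewrite (col_inj wE vE hw).
- case=> j _ ->; rewrite /g; case: pickP => [w /andP [wE /eqP hw]|hn].
    by exists w => //; rewrite ffunE hw.
  by have [v vE hv] := col_surj e j; move: (hn v); rewrite vE hv eqxx.
Qed.

End Embed.

Lemma card_EV (T : finType) (adj : rel T) r' (c : T -> 'I_r'.+3) :
  (forall x y, adj x y -> c x != c y) ->
  #|exp_vertex adj r'.+3| <= 'C(r'.+3, 2) * #|T| ^ 2 + #|T|.
Proof.
move=> hc.
have hg : #|gedges adj| <= #|T| ^ 2.
  apply: (@leq_trans 'C(#|T|, 2)); last exact: bin_le_exp.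
  rewrite -card_draws; apply: subset_leq_card; apply/subsetP => e /gedgesP [x [y [hxy ->]]].
  have nxy : x != y by apply/eqP => exy; move: (hc _ _ hxy); rewrite exy eqxx.
  by rewrite inE cards2 nxy.
rewrite /exp_vertex card_sum card_prod card_sig card_ord addnC leq_add2r.
have hr : r'.+1 <= 'C(r'.+3, 2) by rewrite binS bin1; apply: leq_trans (leqnSn _) (leq_addl _ _).
rewrite -cardsE. 
apply: (leq_trans (leq_mul (leqnn _) hr)); rewrite mulnC leq_mul2l; apply/orP; right.
apply: leq_trans hg; apply: subset_leq_card; apply/subsetP => e; by rewrite !inE.
Qed.

Lemma key_nat (T : finType) (adj : rel T) r' (c : T -> 'I_r'.+3) :
  (forall x y, adj x y -> c x != c y) -> 0 < #|T| ->
  exists C0, forall n,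
    (ex_exp adj r'.+3 n) ^ (('C(r'.+3, 2) * #|T| ^ 2 + #|T|) ^ r'.+2) <=
    C0 * n ^ (r'.+3 * ('C(r'.+3, 2) * #|T| ^ 2 + #|T|) ^ r'.+2 - 1).
Proof.
move=> hc T0.
set x := 'C(r'.+3, 2) * #|T| ^ 2 + #|T|.
have x0 : 0 < x by rewrite /x addn_gt0 T0 orbT.
have [C0 hC] := erdos r'.+2 x0.
exists C0 => n; rewrite /ex_exp.
set P := fun H : {set {set 'I_n}} => uniform r'.+3 H && ~~ contains_copy (expansion adj r'.+3) H.
case: (pickP P) => [H0 PH0|none].
  rewrite (bigmax_eq_arg _ PH0); case: arg_maxnP => // H1 /andP [u nc] _.
  have := hC _ H1; rewrite card_ord; apply.
    by move=> e he; move/forall_inP: u => /(_ e he) /eqP.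
  move=> hk; apply: (negP nc); apply: (embed hc _ hk).
  exact: card_EV hc.
rewrite big_pred0 // exp0n //; by rewrite expn_gt0 x0.
Qed.

Lemma ex_exp_le (T : finType) (adj : rel T) r n : ex_exp adj r n <= n ^ r.
Proof.
apply/bigmax_leqP => H /andP [u _].
apply: (leq_trans _ (bin_le_exp n r)).
rewrite -[X in 'C(X, _)](card_ord n) -card_draws; apply: subset_leq_card; apply/subsetP => e he.
by rewrite inE; move/forall_inP: u => /(_ e he).
Qed.

Unset Implicit Arguments.
Set Strict Implicit.
Import Order.TTheory GRing.Theory Num.Theory.
Local Open Scope ring_scope.

Theorem theorem3p2 (R : realType) (r : nat) (T : finType) (adj : rel T) :
  (3 <= r)%N -> simple_graph adj -> colorable adj r ->
  exists C : R, 0 < C /\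
    forall n : nat,
      (ex_exp adj r n)%:R <=
        C * powR (n%:R)
              (r%:R - 1 / (('C(r, 2) * #|T| ^ 2 + #|T|)%N%:R) ^+ (r - 1)).
Proof.
move=> hr _ [c hc].
case: r hr c hc => [|[|[|r']]] // _ c hc.
case: (posnP #|T|) => [T0|T0].
  exists 1; split => // n.
  rewrite T0.
  have -> : ('C(r'.+3,2) * 0 ^ 2 + 0)%N = 0%N by rewrite exp0n // muln0.
  rewrite expr0n /= div1r invr0 subr0 mul1r powR_mulrn // -natrX ler_nat.
  exact: ex_exp_le.
have [C0 hC] := key_nat hc T0.
exists (C0.+1)%:R; split => // n.
set x := ('C(r'.+3, 2) * #|T| ^ 2 + #|T|)%N.
set K := (x ^ r'.+2)%N.
have hm := hC n.
have K0 : (0 < K)%N by rewrite /K expn_gt0 /x addn_gt0 T0 orbT.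
have rK : (0 < r'.+3 * K - 1)%N by move: K0; move: K => k; lia.
set m := ex_exp adj r'.+3 n.
rewrite -/m in hm *.
rewrite [(r'.+3 - 1)%N]/= -natrX -/K div1r.
case: (posnP n) => [n0|n0].
  have : (m ^ K <= 0)%N by move: hm; rewrite n0 exp0n // muln0.
  rewrite leqn0 expn_eq0 K0 andbT => /eqP ->.
  by rewrite mulr_ge0 ?powR_ge0.
have hz : (n%:R `^ (r'.+3%:R - K%:R^-1) : R) ^+ K = (n ^ (r'.+3 * K - 1))%:R.
  rewrite -powR_mulrn ?powR_ge0 //.
  rewrite -powRrM.
  have -> : (r'.+3%:R - K%:R^-1) * K%:R = ((r'.+3 * K - 1)%N)%:R :> R.
    have h1 : (1 <= r'.+3 * K)%N by apply: ltnW; rewrite -subn_gt0.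
    rewrite natrB //.
    by rewrite natrM mulrBl mulVf // pnatr_eq0 -lt0n.
  by rewrite powR_mulrn // natrX.
rewrite -(ler_pXn2r K0) ?nnegrE ?mulr_ge0 ?powR_ge0 // exprMn hz -!natrX -natrM ler_nat.
apply: (leq_trans hm); apply: leq_mul => //.
by apply: (leq_trans (leqnSn C0)); rewrite -{1}(expn1 C0.+1) leq_pexp2l.
Qed.
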